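(* Let $M=\{D_1,\dots,D_m\}$, $m\ge3$, be a 2-disk system of pairwise distinct disks whose Vietoris–Rips scale satisfies $\nu_M>0$. Then for all $i\ne j$ and $k\notin\{i,j\}$ the map $\Lambda^k_{i,j}:[\nu_M,\infty)\to\mathbb R$, $\lambda\mapsto\lambda r_k-\|d_{ij}(\lambda)-c_k\|$, is continuous, and consequently $\rho_M:[\nu_M,\infty)\to\mathbb R$ is continuous.
   Context: A 2-disk system is a finite collection of closed disks $D_i=D(c_i;r_i)\subset\mathbb R^2$ with $r_i>0$; $\partial D$ is the boundary circle. $\nu_M=\max_{i<j}\|c_i-c_j\|/(r_i+r_j)$ is the Vietoris–Rips scale, so for $\lambda\ge\nu_M$ the disks $D(c_i;\lambda r_i)$ pairwise intersect. Definition of $d_{ij}$ for two intersecting disks $D_i,D_j$ ($i\ne j$): write $c_j-c_i=(a,b)$, $\mathbf n_{ij}=(-b,a)$. (1) If $\partial D_i\cap\partial D_j\ne\emptyset$, $d_{ij}$ is the unique point of $\partial D_i\cap\partial D_j$ with $\langle d_{ij}-c_i,\mathbf n_{ij}\rangle\ge0$. (2) If $\partial D_i\cap\partial D_j=\emptyset$, let $\lambda_0=\|c_i-c_j\|/|r_i-r_j|$ and $d_{ij}$ is the unique point of $\partial D(c_i;\lambda_0 r_i)\cap\partial D(c_j;\lambda_0 r_j)$ (equal to $c_i$ if $c_i=c_j$). $d_{ij}(\lambda)$ denotes this point for the rescaled disks $D(c_i;\lambda r_i),D(c_j;\lambda r_j)$. For a 2-disk system $M$ with $m\ge3$ pairwise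 intersecting disks, $\rho(M)=\max_{i\ne j}\min_{k\notin\{i,j\}}\big(r_k-\|d_{ij}-c_k\|\big)$, and $\rho_M(\lambda)=\rho(M_\lambda)=\max_{i\neq j}\min_{k\notin\{i,j\}}\Lambda^k_{i,j}(\lambda)$ for $\lambda\ge\nu_M$, where $M_\lambda=\{D(c_i;\lambda r_i)\}$. *)

(* Defs.v *)
From Stdlib Require Import Reals Lra List ClassicalEpsilon.
Import ListNotations.
Open Scope R_scope.

Definition pt := (R * R)%type.

Definition psub (p q : pt) : pt := (fst p - fst q, snd p - snd q).
Definition inner (p q : pt) : R := fst p * fst q + snd p * snd q.
Definition norm (p : pt) : R := sqrt (fst p * fst p + snd p * snd p).
Definition dist (p q : pt) : R := norm (psub p q).

Definition on_circle (c : pt) (r : R) (p : pt) : Prop := dist p c = r.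

Definition nvec (ci cj : pt) : pt :=
  (- snd (psub cj ci), fst (psub cj ci)).

Definition pt_inh : inhabited pt := inhabits (0, 0).

Definition dpt (ci : pt) (ri : R) (cj : pt) (rj : R) : pt :=
  if excluded_middle_informative
       (exists p, on_circle ci ri p /\ on_circle cj rj p)
  then epsilon pt_inh (fun p => on_circle ci ri p /\ on_circle cj rj p /\
                                 0 <= inner (psub p ci) (nvec ci cj))
  else let l0 := dist ci cj / Rabs (ri - rj) in
       epsilon pt_inh (fun p => on_circle ci (l0 * ri) p /\
                                 on_circle cj (l0 * rj) p).

Definition Rmax_list (l : list R) : R :=
  match l with [] => 0 | x :: t => fold_right Rmax x t end.
Definition Rmin_list (l : list R) : R :=
  match l with [] => 0 | x :: t => fold_right Rmin x t end.

(* Disk system: indices 0 .. m-1, centers c, radii r. *)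
Definition idx (m : nat) : list nat := seq 0 m.

Definition pairs_lt (m : nat) : list (nat * nat) :=
  flat_map (fun i => map (fun j => (i, j)) (filter (fun j => Nat.ltb i j) (idx m))) (idx m).

Definition pairs_ne (m : nat) : list (nat * nat) :=
  flat_map (fun i => map (fun j => (i, j))
     (filter (fun j => negb (Nat.eqb i j)) (idx m))) (idx m).

Definition nuM (m : nat) (c : nat -> pt) (r : nat -> R) : R :=
  Rmax_list (map (fun ij => dist (c (fst ij)) (c (snd ij)) /
                             (r (fst ij) + r (snd ij))) (pairs_lt m)).

Definition d_lam (c : nat -> pt) (r : nat -> R) (i j : nat) (lam : R) : pt :=
  dpt (c i) (lam * r i) (c j) (lam * r j).

Definition Lam (c : nat -> pt) (r : nat -> R) (i j k : nat) (lam : R) : R :=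
  lam * r k - dist (d_lam c r i j lam) (c k).

Definition rhoM (m : nat) (c : nat -> pt) (r : nat -> R) (lam : R) : R :=
  Rmax_list (map (fun ij =>
     Rmin_list (map (fun k => Lam c r (fst ij) (snd ij) k lam)
        (filter (fun k => andb (negb (Nat.eqb k (fst ij))) (negb (Nat.eqb k (snd ij))))
                (idx m))))
     (pairs_ne m)).

Definition cont_on_from (a : R) (f : R -> R) : Prop :=
  forall x, a <= x -> continue_in f (fun y => a <= y) x.

(* Main.v *)
Require Import Defs.
From Stdlib Require Import Reals List ClassicalEpsilon.
From Stdlib Require Import Lra Psatz Lia.
Open Scope R_scope.

Lemma circ_fwd c rho p : on_circle c rho p ->
  0 <= rho /\ (fst p - fst c)^2 + (snd p - snd c)^2 = rho^2.
Proof.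
  destruct p as [px py]; destruct c as [cx cy].
  unfold on_circle, Defs.dist, norm, psub; simpl. intros H.
  assert (Hn : 0 <= (px - cx) * (px - cx) + (py - cy) * (py - cy)) by (pose proof (Rle_0_sqr (px-cx)); pose proof (Rle_0_sqr (py-cy)); unfold Rsqr in *; lra).
  split. rewrite <- H. apply sqrt_pos.
  rewrite <- H. rewrite !Rmult_1_r, sqrt_sqrt; auto.
Qed.

Lemma circ_bwd c rho p : 0 <= rho -> (fst p - fst c)^2 + (snd p - snd c)^2 = rho^2 ->
  on_circle c rho p.
Proof.
  destruct p as [px py]; destruct c as [cx cy].
  unfold on_circle, Defs.dist, norm, psub; simpl. intros H0 H.
  replace ((px - cx) * (px - cx) + (py - cy) * (py - cy)) with (rho*rho) by (simpl in H; lra).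
  apply sqrt_square; auto.
Qed.

(* explicit intersection point *)
Definition DD (ci cj : pt) := (fst cj - fst ci)^2 + (snd cj - snd ci)^2.
Definition alf ci cj (ri rj : R) := (DD ci cj + ri^2 - rj^2)/2.
Definition disc ci cj ri rj := DD ci cj * ri^2 - (alf ci cj ri rj)^2.
Definition Fx (ci cj : pt) (ri rj : R) : pt :=
  let a := fst cj - fst ci in let b := snd cj - snd ci in
  let al := alf ci cj ri rj in let be := sqrt (disc ci cj ri rj) in
  (fst ci + (a*al - b*be)/DD ci cj, snd ci + (b*al + a*be)/DD ci cj).

Lemma both_disc ci cj ri rj p : on_circle ci ri p -> on_circle cj rj p ->
  (inner (psub p ci) (nvec ci cj))^2 = disc ci cj ri rj.
Proof.
  intros H1 H2. apply circ_fwd in H1 as [_ H1]. apply circ_fwd in H2 as [_ H2].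
  unfold disc, alf, DD, inner, psub, nvec; cbn [fst snd].
  destruct p as [px py]; destruct ci as [x1 y1]; destruct cj as [x2 y2]; cbn [fst snd] in *.
  rewrite <- H1. replace (rj^2) with ((px - x2) ^ 2 + (py - y2) ^ 2) by lra.
  unfold psub; cbn [fst snd]; field.
Qed.

Lemma both_eq ci cj ri rj p : 0 < DD ci cj -> on_circle ci ri p -> on_circle cj rj p ->
  0 <= inner (psub p ci) (nvec ci cj) -> p = Fx ci cj ri rj.
Proof.
  intros HD H1 H2 Hin.
  assert (Hb := both_disc _ _ _ _ _ H1 H2).
  assert (Hs : sqrt (disc ci cj ri rj) = inner (psub p ci) (nvec ci cj)).
  { rewrite <- Hb. simpl. rewrite Rmult_1_r. apply sqrt_square; auto. }
  apply circ_fwd in H1 as [_ H1]. apply circ_fwd in H2 as [_ H2].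
  unfold Fx. rewrite Hs. clear Hs Hb Hin.
  unfold alf, DD, inner, nvec, psub in *.
  destruct p as [px py]; destruct ci as [x1 y1]; destruct cj as [x2 y2]; cbn [fst snd] in *.
  assert (Hri : ri^2 = (px - x1) ^ 2 + (py - y1) ^ 2) by lra.
  assert (Hrj : rj^2 = (px - x2) ^ 2 + (py - y2) ^ 2) by lra.
  rewrite Hri, Hrj. f_equal; field; lra.
Qed.

Lemma Fx_ok ci cj ri rj : 0 < DD ci cj -> 0 <= ri -> 0 <= rj -> 0 <= disc ci cj ri rj ->
  on_circle ci ri (Fx ci cj ri rj) /\ on_circle cj rj (Fx ci cj ri rj) /\
  0 <= inner (psub (Fx ci cj ri rj) ci) (nvec ci cj).
Proof.
  intros HD H1 H2 Hd.
  assert (Hs := sqrt_sqrt _ Hd). assert (Hp := sqrt_pos (disc ci cj ri rj)).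
  set (be := sqrt (disc ci cj ri rj)) in *.
  unfold disc, alf in Hs.
  unfold Fx; fold be. unfold alf in *. unfold DD in *.
  destruct ci as [x1 y1]; destruct cj as [x2 y2]; cbn [fst snd] in *.
  set (a := x2 - x1) in *. set (b := y2 - y1) in *.
  set (al := (a^2 + b^2 + ri^2 - rj^2)/2) in *.
  assert (Hx : be * be + al^2 = (a^2+b^2) * ri^2) by (rewrite Hs; ring).
  assert (HS : 0 < a^2+b^2) by lra.
  assert (Hid : ((a*al - b*be)/(a^2+b^2))^2 + ((b*al + a*be)/(a^2+b^2))^2 = (al^2 + be*be)/(a^2+b^2)) by (field; lra).
  assert (Hal : 2*al = a^2+b^2+ri^2-rj^2) by (unfold al; field).
  split; [|split].
  - apply circ_bwd; auto. cbn [fst snd].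
    replace (x1 + (a * al - b * be) / (a ^ 2 + b ^ 2) - x1) with ((a * al - b * be) / (a ^ 2 + b ^ 2)) by ring.
    replace (y1 + (b * al + a * be) / (a ^ 2 + b ^ 2) - y1) with ((b * al + a * be) / (a ^ 2 + b ^ 2)) by ring.
    rewrite Hid. replace (al ^ 2 + be * be) with ((a ^ 2 + b ^ 2) * ri ^ 2) by lra. field. lra.
  - apply circ_bwd; auto. cbn [fst snd].
    replace (x1 + (a * al - b * be) / (a ^ 2 + b ^ 2) - x2) with ((a * al - b * be) / (a ^ 2 + b ^ 2) - a) by (unfold a; ring).
    replace (y1 + (b * al + a * be) / (a ^ 2 + b ^ 2) - y2) with ((b * al + a * be) / (a ^ 2 + b ^ 2) - b) by (unfold b; ring).
    assert (Hid2 : ((a*al - b*be)/(a^2+b^2) - a)^2 + ((b*al + a*be)/(a^2+b^2) - b)^2 = ((a*al - b*be)/(a^2+b^2))^2 + ((b*al + a*be)/(a^2+b^2))^2 - 2*al + (a^2+b^2)) by (field; lra).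
    rewrite Hid2, Hid. replace (al ^ 2 + be * be) with ((a ^ 2 + b ^ 2) * ri ^ 2) by lra.
    field_simplify; [|lra]. lra.
  - unfold inner, nvec, psub; cbn [fst snd]. fold a b.
    replace ((x1 + (a * al - b * be) / (a ^ 2 + b ^ 2) - x1) * - b +
  (y1 + (b * al + a * be) / (a ^ 2 + b ^ 2) - y1) * a) with be.
    auto. field. lra.
Qed.

Lemma dpt_case1 ci ri cj rj : 0 < DD ci cj -> 0 <= ri -> 0 <= rj ->
  0 <= disc ci cj ri rj -> dpt ci ri cj rj = Fx ci cj ri rj.
Proof.
  intros HD H1 H2 Hd. destruct (Fx_ok ci cj ri rj HD H1 H2 Hd) as (A & B & C).
  unfold dpt. destruct excluded_middle_informative as [e|n].
  - match goal with |- epsilon _ ?P = _ => assert (Hp : exists p, P p) by (exists (Fx ci cj ri rj); auto);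
      destruct (epsilon_spec pt_inh P Hp) as (A' & B' & C') end.
    apply both_eq; auto.
  - exfalso; apply n; exists (Fx ci cj ri rj); auto.
Qed.

Lemma dpt_case2 ci ri cj rj : 0 < DD ci cj -> disc ci cj ri rj < 0 ->
  let l0 := Defs.dist ci cj / Rabs (ri - rj) in
  0 <= l0 * ri -> 0 <= l0 * rj -> disc ci cj (l0*ri) (l0*rj) = 0 ->
  dpt ci ri cj rj = Fx ci cj (l0*ri) (l0*rj).
Proof.
  intros HD Hd l0 H1 H2 H0. unfold dpt. destruct excluded_middle_informative as [e|n].
  - exfalso. destruct e as [p [A B]]. pose proof (both_disc _ _ _ _ _ A B).
    pose proof (pow2_ge_0 (inner (psub p ci) (nvec ci cj))). lra.
  - fold l0. destruct (Fx_ok ci cj (l0*ri) (l0*rj) HD H1 H2 (Req_le _ _ (eq_sym H0))) as (A & B & C).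
    match goal with |- epsilon _ ?P = _ => assert (Hp : exists p, P p) by (exists (Fx ci cj (l0*ri) (l0*rj)); auto);
      destruct (epsilon_spec pt_inh P Hp) as (A' & B') end.
    apply both_eq; auto.
    pose proof (both_disc _ _ _ _ _ A' B'). rewrite H0 in H.
    match type of H with (?X ^ 2 = 0) => destruct (Req_dec X 0) as [E|E] end; [lra| exfalso; apply (pow_nonzero _ 2 E H)].
Qed.

Lemma dist_self p : Defs.dist p p = 0.
Proof. destruct p as [x y]. unfold Defs.dist, norm, psub; cbn [fst snd]. replace (x - x) with 0 by ring.
  replace (y - y) with 0 by ring. rewrite Rmult_0_l, Rplus_0_l. apply sqrt_0. Qed.

Lemma dpt_same ci ri rj : ri <> rj -> dpt ci ri ci rj = ci.
Proof.
  intros Hne. unfold dpt. destruct excluded_middle_informative as [e|n].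
  - exfalso. destruct e as [p [A B]]. unfold on_circle in *. congruence.
  - rewrite dist_self. unfold Rdiv. rewrite Rmult_0_l, !Rmult_0_l.
    assert (Hc : on_circle ci 0 ci) by (unfold on_circle; apply dist_self).
    match goal with |- epsilon _ ?P = _ => assert (Hp : exists p, P p) by (exists ci; auto);
      destruct (epsilon_spec pt_inh P Hp) as (A' & B') end.
    apply circ_fwd in A' as [_ A']. set (q := epsilon pt_inh _) in *. clearbody q.
    destruct q as [px py]. destruct ci as [x y].
    cbn [fst snd] in *. simpl in A'. pose proof (Rle_0_sqr (px-x)); pose proof (Rle_0_sqr (py-y)); unfold Rsqr in *. assert (E1: (px-x)*(px-x)=0) by lra. assert (E2: (py-y)*(py-y)=0) by lra. apply Rmult_integral in E1, E2. f_equal; lra.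
Qed.

Lemma disc_fact ci cj s t : 4 * disc ci cj s t = ((s+t)^2 - DD ci cj) * (DD ci cj - (s-t)^2).
Proof. unfold disc, alf. field. Qed.

Lemma dist_DD ci cj : Defs.dist ci cj = sqrt (DD ci cj).
Proof. destruct ci, cj. unfold Defs.dist, norm, psub, DD. cbn [fst snd]. f_equal. ring. Qed.

Definition phi (ri rj D lam : R) : R :=
  if Req_EM_T ri rj then lam else Rmin lam (D / Rabs (ri - rj)).

Lemma dlam_eq ci cj ri rj lam : 0 < DD ci cj -> 0 < ri -> 0 < rj -> 0 < lam ->
  Defs.dist ci cj <= lam * (ri + rj) ->
  let s := phi ri rj (Defs.dist ci cj) lam in
  dpt ci (lam*ri) cj (lam*rj) = Fx ci cj (s*ri) (s*rj) /\ 0 <= disc ci cj (s*ri) (s*rj).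
Proof.
  intros HD H1 H2 Hl Hb s.
  set (D := Defs.dist ci cj) in *.
  assert (HDD : D * D = DD ci cj) by (unfold D; rewrite dist_DD; apply sqrt_sqrt; lra).
  assert (HD0 : 0 < D) by (unfold D; rewrite dist_DD; apply sqrt_lt_R0; lra).
  unfold s, phi. destruct Req_EM_T as [e|n].
  - subst rj. assert (Hd : 0 <= disc ci cj (lam*ri) (lam*ri)).
    { assert (4 * disc ci cj (lam*ri) (lam*ri) >= 0); [|lra]. rewrite disc_fact.
      apply Rle_ge, Rmult_le_pos; nra. }
    split; auto. apply dpt_case1; auto; nra.
  - set (A := Rabs (ri - rj)).
    assert (HA : 0 < A) by (apply Rabs_pos_lt; lra).
    assert (HA2 : (ri - rj)^2 = A^2) by (unfold A, Rabs; destruct Rcase_abs; ring).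
    assert (HA3 : A <= ri + rj) by (unfold A, Rabs; destruct Rcase_abs; lra).
    unfold Rmin. destruct Rle_dec as [Hle|Hgt].
    + assert (HlA : lam * A <= D).
      { apply Rmult_le_reg_r with (/A). apply Rinv_0_lt_compat; lra.
        replace (lam * A * / A) with lam by (field; lra). exact Hle. }
      assert (Hd : 0 <= disc ci cj (lam*ri) (lam*rj)).
      { assert (4 * disc ci cj (lam*ri) (lam*rj) >= 0); [|lra]. rewrite disc_fact.
        apply Rle_ge, Rmult_le_pos. nra.
        replace ((lam * ri - lam * rj) ^ 2) with (lam^2 * (ri-rj)^2) by ring. rewrite HA2. assert (lam*A*(lam*A) <= D*D) by (apply Rmult_le_compat; nra). replace (lam^2*A^2) with (lam*A*(lam*A)) by ring. lra. }
      split; auto. apply dpt_case1; auto; nra.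
    + apply Rnot_le_lt in Hgt.
      assert (HlA : D < lam * A).
      { apply Rmult_lt_reg_r with (/A). apply Rinv_0_lt_compat; lra.
        replace (lam * A * / A) with lam by (field; lra). exact Hgt. }
      assert (Hneg : disc ci cj (lam*ri) (lam*rj) < 0).
      { assert (4 * disc ci cj (lam*ri) (lam*rj) < 0); [|lra]. rewrite disc_fact.
        replace ((lam * ri - lam * rj) ^ 2) with (lam^2 * (ri-rj)^2) by ring. rewrite HA2.
        assert (D*D < lam*A*(lam*A)) by (apply Rmult_le_0_lt_compat; lra). assert (lam*A*(lam*A) <= lam*(ri+rj)*(lam*(ri+rj))) by (apply Rmult_le_compat; nra).
        apply Rmult_pos_neg; [replace ((lam * ri + lam * rj) ^ 2) with (lam*(ri+rj)*(lam*(ri+rj))) by ring; lra | replace (lam^2*A^2) with (lam*A*(lam*A)) by ring; lra]. }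
      assert (Hab : Rabs (lam * ri - lam * rj) = lam * A).
      { replace (lam * ri - lam * rj) with (lam * (ri - rj)) by ring.
        rewrite Rabs_mult, Rabs_pos_eq; [reflexivity|lra]. }
      assert (Hz : disc ci cj (D / A * ri) (D / A * rj) = 0).
      { assert (4 * disc ci cj (D / A * ri) (D / A * rj) = 0); [|lra]. rewrite disc_fact.
        replace ((D / A * ri - D / A * rj) ^ 2) with ((D/A)^2 * (ri-rj)^2) by ring. rewrite HA2.
        replace ((D / A) ^ 2 * A ^ 2) with (D*D) by (field; lra). rewrite HDD. ring. }
      split; [|lra].
      pose proof (dpt_case2 ci (lam*ri) cj (lam*rj) HD Hneg) as E. cbv zeta in E.
      fold D in E. rewrite Hab in E.
      replace (D / (lam * A) * (lam * ri)) with (D / A * ri) in E by (field; lra).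
      replace (D / (lam * A) * (lam * rj)) with (D / A * rj) in E by (field; lra).
      apply E; auto.
      apply Rmult_le_pos; [|lra]. unfold Rdiv; apply Rmult_le_pos; [lra|]. left; apply Rinv_0_lt_compat; lra.
      apply Rmult_le_pos; [|lra]. unfold Rdiv; apply Rmult_le_pos; [lra|]. left; apply Rinv_0_lt_compat; lra.
Qed.

Lemma cplus f g x : continuity_pt f x -> continuity_pt g x -> continuity_pt (fun y => f y + g y) x.
Proof. intros; exact (continuity_pt_plus f g x H H0). Qed.
Lemma cminus f g x : continuity_pt f x -> continuity_pt g x -> continuity_pt (fun y => f y - g y) x.
Proof. intros; exact (continuity_pt_minus f g x H H0). Qed.
Lemma cmult f g x : continuity_pt f x -> continuity_pt g x -> continuity_pt (fun y => f y * g y) x.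
Proof. intros; exact (continuity_pt_mult f g x H H0). Qed.
Lemma copp f x : continuity_pt f x -> continuity_pt (fun y => - f y) x.
Proof. intros; exact (continuity_pt_opp f x H). Qed.
Lemma cdiv f g x : continuity_pt f x -> continuity_pt g x -> g x <> 0 -> continuity_pt (fun y => f y / g y) x.
Proof. intros; exact (continuity_pt_div f g x H H0 H1). Qed.
Lemma cconst (k : R) x : continuity_pt (fun _ => k) x.
Proof. apply continuity_pt_const. intros a b; auto. Qed.
Lemma cid x : continuity_pt (fun y => y) x.
Proof. apply derivable_continuous_pt, derivable_pt_id. Qed.
Lemma cpow f n x : continuity_pt f x -> continuity_pt (fun y => f y ^ n) x.
Proof. intros H. induction n. simpl. apply cconst. simpl. apply cmult; auto. Qed.
Lemma csqrt f x : continuity_pt f x -> 0 <= f x -> continuity_pt (fun y => sqrt (f y)) x.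
Proof. intros H H0. exact (continuity_pt_comp f sqrt x H (continuity_pt_sqrt _ H0)). Qed.

Lemma lip_cont f x : (forall a b, Rabs (f a - f b) <= Rabs (a - b)) -> continuity_pt f x.
Proof.
  intros Hl. unfold continuity_pt, continue_in, limit1_in, limit_in. intros eps He.
  exists eps. split; auto. intros y [_ Hy]. simpl in *. unfold Rdist in *.
  eapply Rle_lt_trans; [apply Hl|auto].
Qed.

Lemma phi_cont ri rj D x : continuity_pt (fun y => phi ri rj D y) x.
Proof.
  apply lip_cont. intros a b. unfold phi. destruct Req_EM_T. lra.
  generalize (D / Rabs (ri - rj)). intros k.
  unfold Rmin. repeat destruct Rle_dec; try apply Rnot_le_lt in n0; try apply Rnot_le_lt in n1; unfold Rabs; repeat destruct Rcase_abs; lra.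
Qed.

Ltac cont := match goal with
 | |- continuity_pt (fun y => @?A y + @?B y) _ => apply (cplus A B); cont
 | |- continuity_pt (fun y => @?A y - @?B y) _ => apply (cminus A B); cont
 | |- continuity_pt (fun y => @?A y * @?B y) _ => apply (cmult A B); cont
 | |- continuity_pt (fun y => @?A y / @?B y) _ => apply (cdiv A B); [cont|cont|]
 | |- continuity_pt (fun y => - @?A y) _ => apply (copp A); cont
 | |- continuity_pt (fun y => @?A y ^ _) _ => apply (cpow A); cont
 | |- continuity_pt (fun y => sqrt (@?A y)) _ => apply (csqrt A); [cont|]
 | |- continuity_pt (fun y => phi _ _ _ y) _ => apply phi_cont
 | |- continuity_pt (fun y => y) _ => apply cid
 | |- continuity_pt (fun _ => ?k) _ => apply cconst
 | |- _ => idtac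
 end.


Lemma transfer f g (D : R -> Prop) x : (forall y, D y -> f y = g y) -> D x -> continuity_pt g x ->
  continue_in f D x.
Proof.
  intros E Dx Hg. unfold continuity_pt, continue_in, limit1_in, limit_in in *.
  intros eps He. destruct (Hg eps He) as [alp [Ha Hc]]. exists alp. split; auto.
  intros y [[Dy Hne] Hy]. rewrite (E y Dy), (E x Dx). apply Hc. split; auto.
  split; auto. exact I.
Qed.

Lemma cont_in_const (k : R) D x : continue_in (fun _ => k) D x.
Proof.
  unfold continue_in, limit1_in, limit_in. intros eps He. exists 1. split; [lra|].
  intros y _. simpl. unfold Rdist. rewrite Rminus_diag, Rabs_R0. auto.
Qed.

Lemma cont_in_2 (op : R -> R -> R) f g D x :
  (forall a b c d e, 0 < e -> Rabs (a - c) < e -> Rabs (b - d) < e -> Rabs (op a b - op c d) < e) ->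
  continue_in f D x -> continue_in g D x -> continue_in (fun y => op (f y) (g y)) D x.
Proof.
  intros Hop Hf Hg. unfold continue_in, limit1_in, limit_in in *.
  intros eps He. destruct (Hf eps He) as [a1 [Ha1 H1]]. destruct (Hg eps He) as [a2 [Ha2 H2]].
  exists (Rmin a1 a2). split. apply Rmin_pos; auto.
  intros y [Dy Hy]. simpl in *. unfold Rdist in *. apply Hop; auto.
  apply H1; split; auto. simpl. unfold Rdist. eapply Rlt_le_trans; [exact Hy| apply Rmin_l].
  apply H2; split; auto. simpl. unfold Rdist. eapply Rlt_le_trans; [exact Hy| apply Rmin_r].
Qed.

Lemma op_max a b c d e : 0 < e -> Rabs (a - c) < e -> Rabs (b - d) < e -> Rabs (Rmax a b - Rmax c d) < e.
Proof. intros. unfold Rmax in *. repeat destruct Rle_dec; unfold Rabs in *; repeat destruct Rcase_abs; lra. Qed.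
Lemma op_min a b c d e : 0 < e -> Rabs (a - c) < e -> Rabs (b - d) < e -> Rabs (Rmin a b - Rmin c d) < e.
Proof. intros. unfold Rmin in *. repeat destruct Rle_dec; unfold Rabs in *; repeat destruct Rcase_abs; lra. Qed.

Lemma cont_fold (op : R -> R -> R) {A} (F : A -> R -> R) (h : R -> R) l D x :
  (forall a b c d e, 0 < e -> Rabs (a - c) < e -> Rabs (b - d) < e -> Rabs (op a b - op c d) < e) ->
  continue_in h D x -> (forall a, In a l -> continue_in (F a) D x) ->
  continue_in (fun y => fold_right op (h y) (map (fun a => F a y) l)) D x.
Proof.
  intros Hop Hh. induction l as [|a l IH]; intros Hl; simpl. exact Hh.
  apply (cont_in_2 op (F a) (fun y => fold_right op (h y) (map (fun a => F a y) l))); auto.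
  apply Hl; left; auto. apply IH. intros; apply Hl; right; auto.
Qed.

Lemma cont_max_list {A} (F : A -> R -> R) l D x :
  (forall a, In a l -> continue_in (F a) D x) ->
  continue_in (fun y => Rmax_list (map (fun a => F a y) l)) D x.
Proof.
  intros Hl. destruct l as [|a l]; simpl. apply cont_in_const.
  apply (cont_fold Rmax F (F a)). exact op_max. apply Hl; left; auto. intros; apply Hl; right; auto.
Qed.

Lemma cont_min_list {A} (F : A -> R -> R) l D x :
  (forall a, In a l -> continue_in (F a) D x) ->
  continue_in (fun y => Rmin_list (map (fun a => F a y) l)) D x.
Proof.
  intros Hl. destruct l as [|a l]; simpl. apply cont_in_const.
  apply (cont_fold Rmin F (F a)). exact op_min. apply Hl; left; auto. intros; apply Hl; right; auto.
Qed.

Lemma In_le_max x l : In x l -> x <= Rmax_list l.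
Proof.
  destruct l as [|y t]; simpl. tauto. intros H.
  induction t as [|z t IH]; simpl in *. destruct H; [subst; lra|tauto].
  destruct H as [H|[H|H]].
  - subst. eapply Rle_trans; [apply IH; auto|apply Rmax_r].
  - subst. apply Rmax_l.
  - eapply Rle_trans; [apply IH; auto|apply Rmax_r].
Qed.

Lemma in_pairs_lt m i j : (i < j)%nat -> (j < m)%nat -> In (i, j) (pairs_lt m).
Proof.
  intros. unfold pairs_lt. apply in_flat_map. exists i. split.
  unfold idx; apply in_seq; lia.
  apply in_map. apply filter_In. split. unfold idx; apply in_seq; lia. apply Nat.ltb_lt; auto.
Qed.

Lemma dist_sym p q : Defs.dist p q = Defs.dist q p.
Proof. rewrite !dist_DD. f_equal. unfold DD. ring. Qed.

Lemma nu_bound m c r i j : (i < m)%nat -> (j < m)%nat -> i <> j ->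
  Defs.dist (c i) (c j) / (r i + r j) <= nuM m c r.
Proof.
  intros Hi Hj Hne. unfold nuM. apply In_le_max.
  destruct (Nat.lt_gt_cases i j) as [[Hl|Hl] _]; auto.
  - apply (in_map (fun ij => Defs.dist (c (fst ij)) (c (snd ij)) / (r (fst ij) + r (snd ij))) _ (i, j)).
    apply in_pairs_lt; auto.
  - rewrite dist_sym, Rplus_comm.
    apply (in_map (fun ij => Defs.dist (c (fst ij)) (c (snd ij)) / (r (fst ij) + r (snd ij))) _ (j, i)).
    apply in_pairs_lt; auto.
Qed.

Lemma Lam_cont m c r i j k
  (Hr : forall i, (i < m)%nat -> 0 < r i)
  (Hdistinct : forall i j, (i < m)%nat -> (j < m)%nat -> i <> j ->
                 (c i, r i) <> (c j, r j))
  (Hnu : 0 < nuM m c r) :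
  (i < m)%nat -> (j < m)%nat -> i <> j -> cont_on_from (nuM m c r) (Lam c r i j k).
Proof.
  intros Hi Hj Hij x Hx.
  assert (Hri := Hr i Hi). assert (Hrj := Hr j Hj).
  destruct (excluded_middle_informative (c i = c j)) as [e|ne].
  - assert (Hne : r i <> r j) by (intro E; apply (Hdistinct i j Hi Hj Hij); rewrite e, E; reflexivity).
    apply transfer with (g := fun y => y * r k - Defs.dist (c i) (c k)); auto.
    + intros y Hy. unfold Lam, d_lam. rewrite <- e. rewrite dpt_same; auto.
      intro E. apply Hne. apply Rmult_eq_reg_l with y; lra.
    + cont.
  - assert (HD : 0 < DD (c i) (c j)).
    { unfold DD. destruct (c i) as [xi yi], (c j) as [xj yj]. cbn [fst snd].
      destruct (Req_dec xi xj); destruct (Req_dec yi yj).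
      - subst. congruence.
      - assert (0 < (yj - yi)^2) by (simpl; rewrite Rmult_1_r; apply Rsqr_pos_lt; lra). pose proof (pow2_ge_0 (xj - xi)). lra.
      - assert (0 < (xj - xi)^2) by (simpl; rewrite Rmult_1_r; apply Rsqr_pos_lt; lra). pose proof (pow2_ge_0 (yj - yi)). lra.
      - assert (0 < (xj - xi)^2) by (simpl; rewrite Rmult_1_r; apply Rsqr_pos_lt; lra). pose proof (pow2_ge_0 (yj - yi)). lra. }
    assert (Hb : forall y, nuM m c r <= y -> Defs.dist (c i) (c j) <= y * (r i + r j)).
    { intros y Hy. pose proof (nu_bound m c r i j Hi Hj Hij).
      replace (Defs.dist (c i) (c j)) with (Defs.dist (c i) (c j) / (r i + r j) * (r i + r j)) by (field; lra).
      apply Rmult_le_compat_r; lra. }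
    apply transfer with (g := fun y => y * r k - Defs.dist (Fx (c i) (c j)
        (phi (r i) (r j) (Defs.dist (c i) (c j)) y * r i)
        (phi (r i) (r j) (Defs.dist (c i) (c j)) y * r j)) (c k)); auto.
    + intros y Hy. unfold Lam, d_lam. rewrite (proj1 (dlam_eq (c i) (c j) (r i) (r j) y HD Hri Hrj ltac:(lra) (Hb y Hy))).
      reflexivity.
    + pose proof (proj2 (dlam_eq (c i) (c j) (r i) (r j) x HD Hri Hrj ltac:(lra) (Hb x Hx))) as Hd0.
      cbv zeta in Hd0.
      set (D := Defs.dist (c i) (c j)) in *. clearbody D.
      set (DDc := DD (c i) (c j)) in *.
      unfold Defs.dist, norm, psub, Fx. cbv zeta. cbn [fst snd].
      cont; try exact Hd0; try (unfold DDc in HD; lra);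
      try (match goal with |- 0 <= ?a * ?a + ?b * ?b => pose proof (Rle_0_sqr a); pose proof (Rle_0_sqr b); unfold Rsqr in *; lra end);
      unfold disc, alf; cont; lra.
Qed.

Lemma in_pairs_ne m i j : In (i, j) (pairs_ne m) -> (i < m)%nat /\ (j < m)%nat /\ i <> j.
Proof.
  unfold pairs_ne, idx. intros H. apply in_flat_map in H as [i0 [H1 H2]].
  apply in_map_iff in H2 as [j0 [E H3]]. inversion E; subst.
  apply filter_In in H3 as [H3 H4]. apply in_seq in H1, H3.
  apply Bool.negb_true_iff, Nat.eqb_neq in H4. lia.
Qed.

Theorem mainTheorem6 (m : nat) (c : nat -> pt) (r : nat -> R)
  (Hm : (3 <= m)%nat)
  (Hr : forall i, (i < m)%nat -> 0 < r i)
  (Hdistinct : forall i j, (i < m)%nat -> (j < m)%nat -> i <> j ->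
                 (c i, r i) <> (c j, r j))
  (Hnu : 0 < nuM m c r) :
  (forall i j k, (i < m)%nat -> (j < m)%nat -> (k < m)%nat ->
     i <> j -> k <> i -> k <> j ->
     cont_on_from (nuM m c r) (Lam c r i j k))
  /\ cont_on_from (nuM m c r) (rhoM m c r).
Proof.
  split.
  - intros i j k Hi Hj Hk Hij _ _. apply Lam_cont; auto.
  - intros x Hx. unfold rhoM.
    apply (cont_max_list (fun ij lam => Rmin_list (map (fun k => Lam c r (fst ij) (snd ij) k lam)
        (filter (fun k => andb (negb (Nat.eqb k (fst ij))) (negb (Nat.eqb k (snd ij)))) (idx m))))).
    intros [i j] Hin. apply in_pairs_ne in Hin as (Hi & Hj & Hij). cbn [fst snd].
    apply (cont_min_list (fun k lam => Lam c r i j k lam)).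
    intros k _. apply Lam_cont; auto.
Qed.
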